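(* Let $n\ge 2$ and let $\mathcal{P}(Q_{4n})$ be the power graph of the generalized quaternion group $Q_{4n}$. Then $-3\sqrt2$ is an eigenvalue of the Sombor matrix of $\mathcal{P}(Q_{4n})$ with multiplicity at least $n$.
   Context: For a finite simple graph $\Gamma$ with vertices $u_1,\dots,u_N$, the Sombor matrix $S(\Gamma)$ has $(i,j)$ entry $\sqrt{\deg(u_i)^2+\deg(u_j)^2}$ if $u_i,u_j$ are adjacent and $0$ otherwise. $Q_{4n}=\langle a,b: a^{2n}=e,\ a^n=b^2,\ ba=a^{-1}b\rangle$. The power graph $\mathcal{P}(G)$ of a group $G$ has vertex set $G$, two distinct vertices $x,y$ being adjacent iff $x\in\langle y\rangle$ or $y\in\langle x\rangle$. *)

(* Defs.v *)
From HB Require Import structures.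
From mathcomp Require Import all_boot all_order all_algebra all_fingroup.
From mathcomp Require Import ring.
Set Implicit Arguments. Unset Strict Implicit. Unset Printing Implicit Defensive.
Import Order.TTheory GRing.Theory Num.Theory.

(* The generalized quaternion group Q_{4n} = <a, b | a^{2n}, a^n = b^2,   *)
(* ba = a^{-1} b>, modelled concretely: the pair (i, e) : 'Z_(2n) * bool  *)
(* stands for a^i b^e.  Multiplication follows from b a^j = a^{-j} b and  *)
(* b^2 = a^n:                                                             *)
(*   a^i b^0 * a^j b^f = a^(i+j) b^f                                      *)
(*   a^i b^1 * a^j b^0 = a^(i-j) b                                        *)
(*   a^i b^1 * a^j b^1 = a^(i-j+n)                                        *)
(* (Meaningful for n >= 1, where 'Z_(2n) is Z/2nZ.)                        *)
Section Quaternion.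
Variable n : nat.

Definition quat_type := ('Z_(n.*2) * bool)%type.
HB.instance Definition _ := Finite.on quat_type.

Local Open Scope ring_scope.

Definition quat_mul (x y : quat_type) : quat_type :=
  let: (i, e) := x in let: (j, f) := y in
  if e then (if f then (i - j + n%:R, false) else (i - j, true))
  else (i + j, f).

Definition quat_one : quat_type := (0, false).

Definition quat_inv (x : quat_type) : quat_type :=
  let: (i, e) := x in if e then (i + n%:R, true) else (- i, false).

Lemma quat_nn : (n%:R + n%:R : 'Z_(n.*2)) = 0.
Proof.
rewrite -natrD addnn.
case: n => [|m]; first by [].
by apply: val_inj; rewrite Zp_nat /= doubleS modnn.
Qed.

Lemma quat_mulA : associative quat_mul.
Proof.
have nN : (- n%:R : 'Z_(n.*2)) = n%:R.
  by apply/eqP; rewrite eq_sym -subr_eq0 opprK quat_nn.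
move=> [i [|]] [j [|]] [k [|]] /=; congr pair;
  first [ring | rewrite -[in RHS]nN; ring | rewrite -[in LHS]nN; ring].
Qed.

Lemma quat_mul1g : left_id quat_one quat_mul.
Proof. by move=> [i e]; rewrite /= add0r. Qed.

Lemma quat_mulVg : left_inverse quat_one quat_inv quat_mul.
Proof.
move=> [i [|]] /=; congr pair; last by rewrite addNr.
by rewrite -quat_nn; ring.
Qed.

HB.instance Definition _ :=
  Finite_isGroup.Build quat_type quat_mulA quat_mul1g quat_mulVg.



End Quaternion.

Notation Q4n n := (quat_type n).

Lemma quat_mulgE n (x y : Q4n n) : (x * y)%g = quat_mul x y.
Proof. by []. Qed.


Definition power_adj (gT : finGroupType) : rel gT :=
  fun x y => (x != y) && ((x \in <[y]>%g) || (y \in <[x]>%g)).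

Definition gdeg (V : finType) (adj : rel V) (x : V) : nat := #|[set y | adj x y]|.

Definition sombor_matrix (R : rcfType) (V : finType) (adj : rel V) : 'M[R]_#|V| :=
  \matrix_(i, j)
    (if adj (enum_val i) (enum_val j)
     then Num.sqrt (((gdeg adj (enum_val i)) ^ 2 + (gdeg adj (enum_val j)) ^ 2)%N%:R)
     else 0)%R.

Definition qa n : Q4n n := (1%R, false).
Definition qb n : Q4n n := (0%R, true).

Lemma qa_expg n k : (qa n ^+ k)%g = ((k%:R)%R, false).
Proof.
elim: k => [|k IH] //; rewrite expgS IH quat_mulgE /=.
by rewrite -natr1 GRing.addrC.
Qed.

Lemma quat_relations n :
  [/\ (qa n ^+ n.*2 = 1)%g, (qb n * qb n = qa n ^+ n)%g
    & (qb n * qa n = (qa n)^-1 * qb n)%g].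
Proof.
split; rewrite ?qa_expg //.
- by rewrite -[X in (X%:R)%R]addnn GRing.natrD quat_nn.
- by rewrite quat_mulgE /= GRing.subr0 GRing.add0r.
- by rewrite !quat_mulgE /= GRing.add0r GRing.addr0.
Qed.

(* Main.v *)
Require Import Defs.
From mathcomp Require Import all_boot all_order all_algebra all_fingroup.
From mathcomp Require Import ring.
Import GRing.Theory Num.Theory.
Local Open Scope ring_scope.
Lemma eig_dvd_char (F : fieldType) N k (V : 'M[F]_(k,N)) (A : 'M[F]_N) (lam : F) :
  row_free V -> V *m A = lam *: V -> ('X - lam%:P) ^+ k %| char_poly A.
Proof.
move=> fV eV.
have rk : \rank V = k by apply/eqP.
have kN : (k <= N)%N by rewrite -rk rank_leq_col.
set E := row_ebase V.
have UE : invmx (col_ebase V) *m V = pid_mx k *m E.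
  by rewrite -[in X in _ *m X = _](mulmx_ebase V) rk !mulmxA mulVmx ?col_ebase_unit // mul1mx.
have eU : ((pid_mx k : 'M_(k,N)) *m E) *m A = lam *: ((pid_mx k : 'M_(k,N)) *m E).
  by rewrite -UE -mulmxA eV scalemxAr.
have pidE : forall p (M : 'M[F]_(N,p)) (i' : 'I_k) (i : 'I_N) j,
    val i' = val i -> (pid_mx k *m M) i' j = M i j.
  move=> p M i' i j ei; rewrite mxE (bigD1 i) //= /pid_mx mxE ei eqxx -ei ltn_ord mul1r.
  rewrite big1 ?addr0 // => l nl; rewrite mxE ei.
  by case: eqP => [/val_inj el|]; [rewrite el eqxx in nl | rewrite mul0r].
have rowE : forall i : 'I_N, (i < k)%N -> forall j, (E *m A) i j = lam * E i j.
  move=> i ik j; have := congr1 (fun M : 'M[F]_(k,N) => M (Ordinal ik) j) eU.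
  by rewrite /= -mulmxA (pidE _ (E *m A) (Ordinal ik) i) // => ->; rewrite mxE (pidE _ E (Ordinal ik) i).
set d := \row_(i < N) (if (i < k)%N then 'X - lam%:P else 1 : {poly F}).
set Q := \matrix_(i, j) (if (i < k)%N then (E i j)%:P
            else (map_mx polyC E *m char_poly_mx A) i j).
have eq1 : map_mx polyC E *m char_poly_mx A = diag_mx d *m Q.
  apply/matrixP => i j; rewrite mul_diag_mx [RHS]mxE [d _ _]mxE [Q _ _]mxE.
  case: ifP => ik; last by rewrite mul1r.
  rewrite /char_poly_mx mulmxBr mul_mx_scalar -map_mxM.
  have rE : \sum_l E i l * A l j = lam * E i j by rewrite -rowE // mxE.
  rewrite !mxE rE.
  ring.
have detd : \det (diag_mx d) = ('X - lam%:P) ^+ k.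
  rewrite det_diag.
  rewrite (eq_bigr (fun i : 'I_N => if (i < k)%N then 'X - lam%:P else 1)); last first.
    by move=> i _; rewrite mxE.
  rewrite -(big_mkord xpredT (fun i => if (i < k)%N then 'X - lam%:P else 1)).
  rewrite (big_cat_nat (leq0n k) kN) /=.
  rewrite (eq_big_nat _ _ (F2 := fun=> 'X - lam%:P)); last by move=> i /andP[_ ->].
  rewrite [X in _ * X](eq_big_nat _ _ (F2 := fun=> 1)); last first.
    by move=> i /andP[]; rewrite leqNgt => /negPf ->.
  by rewrite !prodr_const_nat expr1n mulr1 subn0.
have := congr1 determinant eq1; rewrite !det_mulmx det_map_mx detd /= => H.
have : ('X - lam%:P) ^+ k %| (\det E)%:P * char_poly A.
  by rewrite /char_poly H dvdp_mulr.
rewrite mul_polyC dvdpZr //.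
by have := row_ebase_unit V; rewrite unitmxE unitfE.
Qed.

Lemma valZ n k : (0 < n)%N -> (k < n.*2)%N -> val (k%:R : 'Z_(n.*2)) = k.
Proof.
move=> n0 kn; rewrite Zp_nat /= Zp_cast ?modn_small //.
by rewrite -addnn; case: n n0 {kn} => // m _; rewrite addSn ltnS addnS.
Qed.

Lemma nZ_neq0 n : (0 < n)%N -> (n%:R : 'Z_(n.*2)) != 0.
Proof.
move=> n0; apply/eqP => /(congr1 val); rewrite valZ //=.
  by move=> h; rewrite h in n0.
by rewrite -addnn -{1}[n]addn0 ltn_add2l.
Qed.

Lemma nZN n : - (n%:R : 'Z_(n.*2)) = n%:R.
Proof. by apply/eqP; rewrite eq_sym -subr_eq0 opprK quat_nn. Qed.

Lemma mem_cycle_b n (i : 'Z_(n.*2)) (y : Q4n n) :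
  (y \in <[(i, true) : Q4n n]>%g) =
  [|| y == (0, false), y == (i, true), y == (n%:R, false) | y == (i + n%:R, true)].
Proof.
apply/cycleP/idP.
  case=> k ->; elim: k => [|k IH]; first by rewrite expg0 eqxx.
  rewrite expgS quat_mulgE.
  case/or4P: IH => /eqP -> /=.
  - by rewrite subr0 eqxx !orbT.
  - have -> : i - i + n%:R = n%:R by ring.
    by rewrite eqxx !orbT.
  - have -> : i - n%:R = i + n%:R by rewrite -[X in _ = _ + X]nZN.
    by rewrite eqxx !orbT.
  - have -> : i - (i + n%:R) + n%:R = 0 by ring.
    by rewrite eqxx.
case/or4P => /eqP ->.
- by exists 0%N.
- by exists 1%N.
- exists 2%N; rewrite !expgS expg0 !quat_mulgE /=.
  by congr pair; rewrite subr0 subrr add0r.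
- exists 3%N; rewrite !expgS expg0 !quat_mulgE /=.
  by congr pair; rewrite subr0 subrr add0r nZN.
Qed.

Lemma mem_cycle_a n (j : 'Z_(n.*2)) (y : Q4n n) :
  y \in <[(j, false) : Q4n n]>%g -> y.2 = false.
Proof.
case/cycleP => k ->; elim: k => [|k IH] //.
rewrite expgS quat_mulgE; move: IH; case: (((j, false) : Q4n n) ^+ k)%g => a b /= ->.
by [].
Qed.

Lemma addnn_Z n (j : 'Z_(n.*2)) : j + n%:R + n%:R = j.
Proof. by rewrite -addrA quat_nn addr0. Qed.

Lemma eq_addn_Z n (i j : 'Z_(n.*2)) : (i == j + n%:R) = (j == i + n%:R).
Proof.
by apply/eqP/eqP => ->; rewrite addnn_Z.
Qed.

Lemma neq_addn_Z n (j : 'Z_(n.*2)) : (0 < n)%N -> (j == j + n%:R) = false.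
Proof.
move=> n0; apply/eqP => h; move: (@nZ_neq0 n n0).
by rewrite -[X in X == _](addKr j) -h addNr eqxx.
Qed.

Lemma adj_b n (i : 'Z_(n.*2)) (y : Q4n n) : (0 < n)%N ->
  @power_adj (Q4n n) (i, true) y =
  [|| y == (0, false), y == (n%:R, false) | y == (i + n%:R, true)].
Proof.
move=> n0; rewrite /power_adj mem_cycle_b.
case: y => j [|].
  rewrite mem_cycle_b /= !xpair_eqE /= !andbF !andbT /= eq_addn_Z.
  case: (eqVneq i j) => [->|ne] /=; first by rewrite neq_addn_Z.
  by rewrite orbb.
have -> : ((i, true) : Q4n n) \in <[(j, false) : Q4n n]>%g = false.
  by apply/negbTE/negP => /mem_cycle_a.
by rewrite !xpair_eqE /= !andbF !andbT /=.
Qed.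

Lemma deg_b n (i : 'Z_(n.*2)) : (0 < n)%N ->
  gdeg (@power_adj (Q4n n)) (i, true) = 3%N.
Proof.
move=> n0; rewrite /gdeg.
have -> : [set y | @power_adj (Q4n n) (i, true) y] =
   (0, false) |: ((n%:R, false) |: [set (i + n%:R, true)]) :> {set Q4n n}.
  by apply/setP => y; rewrite !inE adj_b.
rewrite !cardsU1 cards1 !inE !xpair_eqE /= !andbF orbF.
by rewrite eq_sym (negbTE (@nZ_neq0 n n0)).
Qed.

Lemma sum_enum (T : finType) (R : nmodType) (F : T -> R) :
  \sum_(l < #|(xpredT : pred T)|) F (@enum_val T (xpredT : pred T) l) = \sum_x F x.
Proof. by rewrite -(big_enum_val (A := xpredT)). Qed.
Arguments sum_enum {T R}.

Lemma sum_pick_l (T : finType) (R : pzRingType) (a : T) (g : T -> R) :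
  \sum_x (x == a)%:R * g x = g a.
Proof.
rewrite (bigD1 a) //= eqxx mul1r big1 ?addr0 // => x /negPf ->.
by rewrite mul0r.
Qed.

Lemma sum_pick_r (T : finType) (R : pzRingType) (a : T) (g : T -> R) :
  \sum_x g x * (x == a)%:R = g a.
Proof.
rewrite (bigD1 a) //= eqxx mulr1 big1 ?addr0 // => x /negPf ->.
by rewrite mulr0.
Qed.

Lemma sum_pick2 (T : finType) (R : pzRingType) (a b : T) (g : T -> R) :
  \sum_x ((x == a)%:R - (x == b)%:R) * g x = g a - g b.
Proof.
rewrite (eq_bigr (fun x => (x == a)%:R * g x - (x == b)%:R * g x)); last first.
  by move=> x _; rewrite mulrBl.
by rewrite sumrB !sum_pick_l.
Qed.

Definition sval (R : rcfType) {n} (x w : Q4n n) : R :=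
  if @power_adj (Q4n n) x w then
    Num.sqrt (((gdeg (@power_adj (Q4n n)) x) ^ 2 + (gdeg (@power_adj (Q4n n)) w) ^ 2)%N%:R)
  else 0.

Lemma sqrt18 (R : rcfType) : Num.sqrt (((3 ^ 2 + 3 ^ 2)%N)%:R : R) = 3%:R * Num.sqrt 2%:R.
Proof.
have -> : (((3 ^ 2 + 3 ^ 2)%N)%:R : R) = 3%:R ^+ 2 * 2%:R by rewrite -natrX -natrM.
by rewrite sqrtrM ?exprn_ge0 ?ler0n // sqrtr_sqr ger0_norm ?ler0n.
Qed.

Lemma key (R : rcfType) n (i : 'Z_(n.*2)) (w : Q4n n) : (0 < n)%N ->
  sval R (i, true) w - sval R (i + n%:R, true) w =
  - (3%:R * Num.sqrt 2%:R) * ((w == (i, true))%:R - (w == (i + n%:R, true))%:R).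
Proof.
move=> n0; rewrite /sval !deg_b // !adj_b // addnn_Z.
case: (eqVneq w (i, true)) => [->|n1].
  by rewrite !xpair_eqE /= !andbF /= neq_addn_Z // deg_b // sqrt18 sub0r subr0 mulr1.
case: (eqVneq w (i + n%:R, true)) => [->|n2].
  by rewrite !xpair_eqE /= !andbF /= deg_b // sqrt18 subr0 sub0r mulrN1 opprK.
by rewrite subr0 subrr mulr0.
Qed.

Theorem theorem6p4 (R : rcfType) (n : nat) (hn : (2 <= n)%N) :
  (n <= mup (- (3%:R * Num.sqrt (2%:R : R)))%R
             (char_poly (sombor_matrix R (@power_adj (Q4n n)))))%N.
Proof.
have n0 : (0 < n)%N by apply: leq_trans hn.
have lt2 : forall k, (k < n)%N -> (k < n.*2)%N.
  by move=> k kn; rewrite -addnn ltn_addr.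
have ltr : forall k, (k < n)%N -> (k + n < n.*2)%N.
  by move=> k kn; rewrite -addnn ltn_add2r.
rewrite mup_geq ?monic_neq0 ?char_poly_monic //.
pose xr (r : 'I_n) : Q4n n := ((r%:R : 'Z_(n.*2)), true).
pose yr (r : 'I_n) : Q4n n := ((r%:R + n%:R : 'Z_(n.*2)), true).
pose V : 'M[R]_(n, #|(Q4n n : finType)|) :=
  \matrix_(r, j) ((enum_val j == xr r)%:R - (enum_val j == yr r)%:R).
apply: (@eig_dvd_char R _ n V).
  apply/row_freeP.
  exists (\matrix_(j, s) (enum_val j == xr s)%:R : 'M[R]_(#|(Q4n n : finType)|, n)).
  apply/matrixP => r s; rewrite !mxE.
  rewrite (eq_bigr (fun l => (fun x => ((x == xr r)%:R - (x == yr r)%:R) * (x == xr s)%:R)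
     (enum_val l))); last by move=> l _; rewrite !mxE.
  transitivity (\sum_x ((x == xr r)%:R - (x == yr r)%:R) * (x == xr s)%:R : R).
    exact: (sum_enum (fun x => ((x == xr r)%:R - (x == yr r)%:R) * (x == xr s)%:R : R)).
  rewrite sum_pick_r /xr /yr !xpair_eqE /= !andbT.
  have -> : ((s%:R : 'Z_(n.*2)) == r%:R) = (r == s).
    apply/eqP/eqP => [/(congr1 val)|-> //].
    by rewrite !valZ ?lt2 // => h; apply: val_inj.
  have -> : ((s%:R : 'Z_(n.*2)) == r%:R + n%:R) = false.
    apply/negbTE/eqP => /(congr1 val); rewrite -natrD !valZ ?ltr ?lt2 //.
    by move=> h; move: (ltn_ord s); rewrite h ltnNge leq_addl.
  by rewrite subr0.
apply/matrixP => r j; rewrite !mxE.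
rewrite (eq_bigr (fun l => (fun x => ((x == xr r)%:R - (x == yr r)%:R) * sval R x (enum_val j))
     (enum_val l))); last by move=> l _; rewrite !mxE.
apply: etrans (sum_enum (fun x => ((x == xr r)%:R - (x == yr r)%:R) * sval R x (enum_val j))) _.
by rewrite sum_pick2 /xr /yr key.
Qed.
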